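(* Let $1\le n\le L$. If $p_i=p$ and $q_i=q$ for all $i$, then $$Z_{L,n}=\binom{L-1}{n-1}\,[n]_{p,q}^{\,L-n},\qquad\text{where } [n]_{p,q}=p^{n-1}+p^{n-2}q+\cdots+pq^{n-2}+q^{n-1}.$$
   Context: Particle labels are taken modulo $n$. $\Omega_{L,n}$ is the set of words $w_1\cdots w_L$ on the ring $\mathbb{Z}/L\mathbb{Z}$ over the alphabet $\{\bullet_1,\dots,\bullet_n,\Box_1,\dots,\Box_n\}$ in which each $\bullet_k$ occurs exactly once, the $\bullet_1,\dots,\bullet_n$ appear in this cyclic order, and the remaining $L-n$ letters are arbitrary $\Box_i$'s. For $w\in\Omega_{L,n}$ let $b_k$ be the position of $\bullet_k$ and $C_k$ the set of positions strictly between $b_k$ and $b_{k+1}$ going cyclically forward ($b_{n+1}=b_1$). For $i,k\in\{1,\dots,n\}$ set $w_\Box(i,k)=p_1\cdots p_{i-1}q_{i+1}\cdots q_kp_{k+1}\cdots p_n$ if $i\le k$ and $w_\Box(i,k)=q_1\cdots q_kp_{k+1}\cdots p_{i-1}q_{i+1}\cdots q_n$ if $k<i$ (empty products are $1$). The weight is $\mathrm{wt}(w)=\prod_{k=1}^n\prod_{j\in C_k}w_\Box(i_j,k)$ where $w_j=\Box_{i_j}$. The restricted partition function is $Z_{L,n}=\sum\mathrm{wt}(w)$, the sum over $w\in\Omega_{L,n}$ with $w_1=\bullet_1$; it is a polynomial in $p_1,\dots,p_n,q_1,\dots,q_n$, and the claim is about its specialization. *)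

(* Defs.v *)
From mathcomp Require Import all_boot all_order all_algebra.
Set Implicit Arguments. Unset Strict Implicit. Unset Printing Implicit Defensive.
Import GRing.Theory.
Local Open Scope ring_scope.

(* Conventions: everything is 0-indexed.  Positions of the ring Z/LZ are
   'I_L (position 0 = the paper's position 1); particle labels are 'I_n
   (label 0 = the paper's label 1).  A letter is  inl k  (= bullet_{k+1})
   or  inr i  (= box_{i+1}). *)

Definition letter (n : nat) := ('I_n + 'I_n)%type.
Definition word (L n : nat) := {ffun 'I_L -> letter n}.

(* Words of Omega_{L,n} with w_1 = bullet_1.  Since the first letter is
   bullet_1, "the bullets appear in cyclic order" amounts to: bullet
   labels increase with position. *)
Definition restricted_word (L n : nat) (w : word L n) : bool :=
  [&& [forall j : 'I_L, (val j == 0)%N ==>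
          (if w j is inl k then val k == 0 else false)%N],
      [forall k : 'I_n, #|[set j | w j == inl k]| == 1%N] &
      [forall j1 : 'I_L, forall j2 : 'I_L, forall k1 : 'I_n, forall k2 : 'I_n,
         [&& w j1 == inl k1, w j2 == inl k2 & (j1 < j2)%N] ==> (k1 < k2)%N]].

(* Index k of the block C_k containing position j: the label of the last
   bullet at a position <= j (number of such bullets, minus one). *)
Definition block_of (L n : nat) (w : word L n) (j : 'I_L) : nat :=
  (#|[set j' : 'I_L | (j' <= j)%N & w j' \in [pred a : letter n | if a is inl _ then true else false]]|.-1)%N.

(* w_Box(i,k); k is the (0-indexed) block label, given as a nat < n *)
Definition wbox (R : comNzRingType) (n : nat) (p q : 'I_n -> R) (i : 'I_n) (k : nat) : R :=
  \prod_(m < n | m != i)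
     (if (i <= k)%N then (if (i < m <= k)%N then q m else p m)
      else (if (k < m < i)%N then p m else q m)).

Definition wt (R : comNzRingType) (L n : nat) (p q : 'I_n -> R) (w : word L n) : R :=
  \prod_(j : 'I_L) (if w j is inr i then wbox p q i (block_of w j) else 1).

Definition Zpart (R : comNzRingType) (L n : nat) (p q : 'I_n -> R) : R :=
  \sum_(w : word L n | restricted_word w) wt p q w.

Definition qint (R : comNzRingType) (n : nat) (p q : R) : R :=
  \sum_(i < n) p ^+ (n.-1 - i) * q ^+ i.

(* Main.v *)
Require Import Defs.
From mathcomp Require Import all_boot all_order all_algebra.
From mathcomp Require Import zify ring.
Set Implicit Arguments. Unset Strict Implicit.
Import GRing.Theory.
Local Open Scope ring_scope.
Lemma count_iotaS (P : pred nat) N :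
  count P (iota 0 N.+1) = (count P (iota 0 N) + P N)%N.
Proof. by rewrite -addn1 iotaD count_cat /= addn0 add0n. Qed.

Lemma count_int a b N :
  count (fun x => (a <= x) && (x < b))%N (iota 0 N) = (minn b N - minn a N)%N.
Proof.
elim: N => [|N IH]; first by rewrite /= !minn0.
rewrite count_iotaS IH.
case: (leqP a N) => H1; case: (ltnP N b) => H2 /=; lia.
Qed.

Lemma count_split (P C : pred nat) s :
  (count (predI P C) s + count (predI P (predC C)) s = count P s)%N.
Proof. elim: s => //= x s IH; case: (P x); case: (C x) => /=; lia. Qed.

Lemma count_neq i N : (i < N)%N -> count (fun x => x != i) (iota 0 N) = N.-1.
Proof.
move=> H.
have := count_predC (pred1 i) (iota 0 N).
rewrite size_iota (count_uniq_mem _ (iota_uniq 0 N)) mem_iota add0n H /= => E.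
by move/(congr1 predn): E; rewrite add1n /= => <-.
Qed.

Section Q.
Variables (R : comNzRingType) (p q : R).

Lemma prod_if (P C : pred nat) N :
  \prod_(m < N | P m) (if C m then q else p) =
  q ^+ count (predI P C) (iota 0 N) * p ^+ count (predI P (predC C)) (iota 0 N).
Proof.
elim: N => [|N IH]; first by rewrite big_ord0 /= !expr0 mulr1.
rewrite big_mkcond big_ord_recr -big_mkcond IH !count_iotaS /=.
case: (P N); case: (C N) => /=; rewrite ?addn0 ?addn1 ?exprS ?mulr1; ring.
Qed.

Definition dd (c i n : nat) := if (i <= c)%N then (c - i)%N else (c + n - i)%N.

Lemma wbox_const n (i : 'I_n) k :
  wbox (fun _ => p) (fun _ => q) i k =
  q ^+ dd (minn k n.-1) i n * p ^+ (n.-1 - dd (minn k n.-1) i n).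
Proof.
rewrite /wbox.
pose C := fun m : nat => if (i <= k)%N then (i < m <= k)%N else ~~ (k < m < i)%N.
transitivity (\prod_(m < n | (fun x : nat => x != i) m) (if C m then q else p)).
  apply: eq_big => // m _; rewrite /C; case: (i <= k)%N => //; by case: ifP.
rewrite (prod_if (fun x : nat => x != i) C).
have Hi := ltn_ord i.
have E := count_split (fun x : nat => x != i) C (iota 0 n).
rewrite count_neq // in E.
rewrite /dd.
case: (leqP i k) => Hik.
  have Hc : count (predI (fun x : nat => x != i) C) (iota 0 n) = (minn k n.-1 - i)%N.
    transitivity (count (fun x => (i.+1 <= x) && (x < k.+1))%N (iota 0 n)).
      by apply: eq_count => x /=; rewrite /C Hik; lia.
    rewrite count_int; lia.
  rewrite Hc in E *.
  have -> : count (predI (fun x : nat => x != i) (predC C)) (iota 0 n) = (n.-1 - (minn k n.-1 - i))%N by lia.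
  have -> : (i <= minn k n.-1)%N by lia.
  done.
have Hc : count (predI (fun x : nat => x != i) (predC C)) (iota 0 n) = (i - k.+1)%N.
  transitivity (count (fun x => (k.+1 <= x) && (x < i))%N (iota 0 n)).
    by apply: eq_count => x /=; rewrite /C leqNgt Hik /=; lia.
  rewrite count_int; lia.
rewrite Hc in E *.
have -> : count (predI (fun x : nat => x != i) C) (iota 0 n) = (n.-1 - (i - k.+1))%N by lia.
have -> : (i <= minn k n.-1)%N = false by lia.
congr (q ^+ _ * p ^+ _); lia.
Qed.

Lemma sum_wbox n k : \sum_(i < n) wbox (fun _ => p) (fun _ => q) i k = qint n p q.
Proof.
case: n => [|n]; first by rewrite /qint !big_ord0.
rewrite /qint.
rewrite (eq_bigr _ (fun (i : 'I_n.+1) _ => @wbox_const n.+1 i k)).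
set c := minn k n.+1.-1.
have Hc : (c <= n)%N by rewrite /c; lia.
pose h := fun i : 'I_n.+1 => (inord (dd c i n.+1) : 'I_n.+1).
have hlt : forall i : 'I_n.+1, (dd c i n.+1 < n.+1)%N.
  by move=> i; rewrite /dd; have := ltn_ord i; case: ifP => H0; lia.
have hinj : injective h.
  move=> i j /(congr1 val); rewrite /h /= !inordK ?hlt // /dd.
  move=> H; apply: val_inj => /=; move: H.
  have := ltn_ord i; have := ltn_ord j.
  by case: ifP => H1; case: ifP => H2; lia.
rewrite [RHS](reindex_inj hinj) /=.
apply: eq_bigr => i _; rewrite /h inordK ?hlt //.
by rewrite mulrC.
Qed.
End Q.

Lemma card_ordP n (P : pred nat) : #|[pred x : 'I_n | P x]| = count P (iota 0 n).
Proof.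
rewrite -val_enum_ord count_map cardE /enum_mem size_filter.
by rewrite [in RHS](@eq_filter _ _ predT) ?filter_predT.
Qed.

Lemma card_lt n m : (m <= n)%N -> #|[set k : 'I_n | (k < m)%N]| = m.
Proof.
move=> H.
rewrite (eq_card (B := [pred x : 'I_n | (0 <= x) && (x < m)]%N)) ?card_ordP ?count_int.
  rewrite (card_ordP n (fun x => (0 <= x) && (x < m))%N) count_int; lia.
by move=> x; rewrite !inE.
Qed.

Definition rank L (S : {set 'I_L}) (j : 'I_L) := #|[set j' in S | (j' < j)%N]|.

Section Key.
Variables (L n : nat) (S : {set 'I_L}) (f : 'I_L -> 'I_n).
Hypothesis mono : {in S &, forall j1 j2 : 'I_L, (j1 < j2)%N -> (f j1 < f j2)%N}.

Lemma mono_inj : {in S &, injective f}.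
Proof.
move=> j1 j2 H1 H2 E; case: (ltngtP j1 j2) => H.
- by have := mono H1 H2 H; rewrite E ltnn.
- by have := mono H2 H1 H; rewrite E ltnn.
- by apply: val_inj.
Qed.

Hypothesis surj : forall k, exists2 j, j \in S & f j = k.

Lemma key j : j \in S -> val (f j) = rank S j.
Proof.
move=> Hj.
rewrite /rank -(card_in_imset (f := f)); last first.
  move=> x y; rewrite !inE => /andP[Hx _] /andP[Hy _]; exact: mono_inj.
have -> : [set f x | x in [set j' in S | (j' < j)%N]] = [set k : 'I_n | (k < f j)%N].
  apply/setP => k; rewrite inE; apply/imsetP/idP.
    by case=> x; rewrite inE => /andP[Hx Hxj] ->; apply: mono.
  move=> Hk; have [x Hx Efx] := surj k.
  exists x => //; rewrite inE Hx /=.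
  case: (ltngtP x j) => // H.
    by have := mono Hj Hx H; rewrite Efx => /(ltn_trans Hk); rewrite ltnn.
  have Exj : x = j by apply: val_inj.
  by move: Hk; rewrite -Efx Exj ltnn.
by rewrite card_lt // ltnW.
Qed.
End Key.

Definition Sb L n (b : {ffun 'I_L -> option 'I_n}) : {set 'I_L} := [set j | b j != None].

Definition Bf L n (S : {set 'I_L}) : {ffun 'I_L -> option 'I_n.+1} :=
  [ffun j => if j \in S then Some (inord (rank S j)) else None].

Definition rwb L n (b : {ffun 'I_L -> option 'I_n}) : bool :=
  [&& [forall j : 'I_L, (val j == 0)%N ==> (if b j is Some k then val k == 0 else false)%N],
      [forall k : 'I_n, #|[set j | b j == Some k]| == 1%N] &
      [forall j1 : 'I_L, forall j2 : 'I_L, forall k1 : 'I_n, forall k2 : 'I_n,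
         [&& b j1 == Some k1, b j2 == Some k2 & (j1 < j2)%N] ==> (k1 < k2)%N]].

Section Comb.
Variables L n : nat.

Definition lab (b : {ffun 'I_L.+1 -> option 'I_n.+1}) j := if b j is Some k then k else ord0.

Lemma rwb_props (b : {ffun 'I_L.+1 -> option 'I_n.+1}) : rwb b ->
  [/\ ord0 \in Sb b, #|Sb b| = n.+1 & b = Bf n (Sb b)].
Proof.
case/and3P => /forallP H1 /forallP H2 /forallP H3.
have mono : {in Sb b &, forall j1 j2 : 'I_L.+1, (j1 < j2)%N -> (lab b j1 < lab b j2)%N}.
  move=> j1 j2; rewrite !inE /lab => Hj1 Hj2 Hlt.
  case E1: (b j1) Hj1 => [k1|] // _; case E2: (b j2) Hj2 => [k2|] // _.
  by have := H3 j1 => /forallP/(_ j2)/forallP/(_ k1)/forallP/(_ k2); rewrite E1 E2 !eqxx Hlt.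
have surj : forall k, exists2 j, j \in Sb b & lab b j = k.
  move=> k; have /cards1P [j Ej] := H2 k.
  have : j \in [set j | b j == Some k] by rewrite Ej set11.
  by rewrite inE => /eqP Ebj; exists j; rewrite ?inE /lab Ebj.
split.
- have := implyP (H1 ord0) (eqxx 0%N); rewrite inE; by case: (b ord0).
- rewrite -(card_in_imset (mono_inj mono)).
  have -> : [set lab b x | x in Sb b] = setT.
    apply/setP => k; rewrite inE; apply/imsetP.
    by have [j Hj Ej] := surj k; exists j.
  by rewrite cardsT card_ord.
- apply/ffunP => j; rewrite ffunE.
  case: ifP => Hj.
    have := key mono surj Hj => <-.
    by move: Hj; rewrite inE /lab inord_val; case: (b j).
  by move: Hj; rewrite inE; case: (b j).
Qed.

Lemma Bf_props (S : {set 'I_L.+1}) : ord0 \in S -> #|S| = n.+1 ->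
  rwb (Bf n S) /\ Sb (Bf n S) = S.
Proof.
move=> H0 HS.
have rlt : forall j, j \in S -> (rank S j < n.+1)%N.
  move=> j Hj; rewrite -HS; apply: proper_card; rewrite properE; apply/andP; split.
    by apply/subsetP => x; rewrite inE => /andP[].
  by apply/subsetPn; exists j => //; rewrite inE ltnn andbF.
pose rk := fun j => (inord (rank S j) : 'I_n.+1).
have mono : {in S &, forall j1 j2 : 'I_L.+1, (j1 < j2)%N -> (rk j1 < rk j2)%N}.
  move=> j1 j2 Hj1 Hj2 Hlt; rewrite /rk !inordK ?rlt //.
  apply: proper_card; rewrite properE; apply/andP; split.
    by apply/subsetP => x; rewrite !inE => /andP[-> Hx] /=; apply: ltn_trans Hx Hlt.
  by apply/subsetPn; exists j1; rewrite !inE ?Hj1 ?Hlt // ltnn andbF.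
have surj : forall k, exists2 j, j \in S & rk j = k.
  have E : rk @: S = setT.
    apply/eqP; rewrite eqEcard subsetT cardsT card_ord (card_in_imset (mono_inj mono)) HS.
    by rewrite andTb.
  move=> k; have : k \in rk @: S by rewrite E inE.
  by case/imsetP => j Hj ->; exists j.
have SbE : Sb (Bf n S) = S.
  by apply/setP => j; rewrite !inE ffunE; case: (j \in S).
split => //.
apply/and3P; split.
- apply/forallP => j; apply/implyP => /eqP Hj0.
  have -> : j = ord0 by apply: val_inj.
  rewrite ffunE H0 /= inordK.
    apply/eqP/eqP; rewrite cards_eq0; apply/eqP/setP => x; rewrite !inE ltn0 andbF //.
  apply: rlt H0.
- apply/forallP => k; apply/cards1P.
  have [j0 Hj0 Ek] := surj k.
  exists j0; apply/setP => j; rewrite !inE ffunE.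
  case: ifP => Hj /=.
    apply/eqP/eqP => [[Ej]|->]; last by rewrite -Ek.
    by apply: (mono_inj mono) => //; rewrite /rk Ej.
  by apply/esym/eqP => Ejj; move: Hj; rewrite Ejj Hj0.
- apply/forallP => j1; apply/forallP => j2; apply/forallP => k1; apply/forallP => k2.
  apply/implyP; rewrite !ffunE.
  case: ifP => Hj1; case: ifP => Hj2 /and3P[/eqP E1 /eqP E2 Hlt]; move: E1 E2 => // [<-] [<-].
  exact: mono.
Qed.

Lemma card_rwb : #|[pred b : {ffun 'I_L.+1 -> option 'I_n.+1} | rwb b]| = 'C(L, n).
Proof.
have inj : {in [pred b | rwb b] &, injective (@Sb L.+1 n.+1)}.
  move=> b1 b2; rewrite !inE => /rwb_props [_ _ E1] /rwb_props [_ _ E2] E.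
  by rewrite E1 E2 E.
rewrite -(card_in_imset inj).
have -> : [set Sb x | x in [pred b : {ffun 'I_L.+1 -> option 'I_n.+1} | rwb b]] =
          [set S : {set 'I_L.+1} | #|S| == n.+1] :&: [set S : {set 'I_L.+1} | ord0 \in S].
  apply/setP => S; rewrite !inE; apply/imsetP/andP.
    by case=> b; rewrite inE => /rwb_props [H0 HS _] ->; rewrite HS.
  case=> /eqP HS H0; have [Hr HE] := Bf_props H0 HS.
  by exists (Bf n S); rewrite ?inE.
have := cardsID [set S : {set 'I_L.+1} | ord0 \in S] [set S : {set 'I_L.+1} | #|S| == n.+1].
rewrite card_draws card_ord binS.
have -> : [set S : {set 'I_L.+1} | #|S| == n.+1] :\: [set S : {set 'I_L.+1} | ord0 \in S] =
          [set S : {set 'I_L.+1} | S \subset [set~ ord0] & #|S| == n.+1].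
  apply/setP => S; rewrite !inE; congr (_ && _).
  apply/idP/subsetP => [H x Hx|H]; first by rewrite !inE; apply/eqP => E; move: Hx; rewrite E => Hx; by rewrite Hx in H.
  by apply/negP => /H; rewrite !inE eqxx.
rewrite cards_draws cardsC1 card_ord /=.
lia.
Qed.
End Comb.

Definition isl n (a : letter n) : bool := if a is inl _ then true else false.

Definition beta L n (w : word L n) : {ffun 'I_L -> option 'I_n} :=
  [ffun j => if w j is inl k then Some k else None].

Lemma rw_beta L n (w : word L n) : restricted_word w = rwb (beta w).
Proof.
have H : forall j k, (w j == inl k) = (beta w j == Some k).
  by move=> j k; rewrite ffunE; case: (w j) => x //=.
rewrite /restricted_word /rwb; congr [&& _, _ & _].
- by apply: eq_forallb => j; rewrite ffunE; case: (w j).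
- apply: eq_forallb => k; congr (_ == _); apply: eq_card => j; by rewrite !inE H.
- apply: eq_forallb => j1; apply: eq_forallb => j2; apply: eq_forallb => k1;
  apply: eq_forallb => k2; by rewrite !H.
Qed.

Section Main.
Variables (R : comNzRingType) (p q : R).

Lemma sum_fiber L n (b : {ffun 'I_L -> option 'I_n}) :
  \sum_(w : word L n | beta w == b) wt (fun _ => p) (fun _ => q) w =
  qint n p q ^+ #|[set j | b j == None]|.
Proof.
pose Qf := fun j (a : letter n) => if b j is Some k then a == inl k else ~~ isl a.
pose blk := fun j : 'I_L => (#|[set j' : 'I_L | (j' <= j)%N & b j' != None]|.-1)%N.
pose F := fun j (a : letter n) => if a is inr i then wbox (fun _ => p) (fun _ => q) i (blk j) else 1.
transitivity (\sum_(w in family Qf) \prod_j F j (w j)).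
  apply: eq_big => w.
    apply/eqP/familyP => [E j|H].
      by rewrite /Qf -E ffunE; case: (w j) => [x|x]; rewrite unfold_in /= ?eqxx.
    apply/ffunP => j; have := H j; rewrite /Qf ffunE.
    by case: (b j) => [k|]; case: (w j) => //= x /eqP [->].
  move=> /eqP Hb; rewrite /wt; apply: eq_bigr => j _; rewrite /F.
  case E: (w j) => [x|i] //; congr wbox.
  rewrite /block_of /blk; congr (_.-1)%N; apply: eq_card => j'; rewrite !inE -Hb ffunE.
  by case: (w j').
rewrite -bigA_distr_big_dep.
transitivity (\prod_(j : 'I_L) (if b j is Some _ then 1 else qint n p q)).
  apply: eq_bigr => j _; rewrite /Qf; case: (b j) => [k|].
    by rewrite big_pred1_eq.
  rewrite big_sumType /= big_pred0 // add0r.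
  exact: sum_wbox.
rewrite (bigID (fun j => b j == None)) /= [X in _ * X]big1; last by move=> j; case: (b j).
rewrite mulr1 (eq_bigr (fun _ => qint n p q)); last by move=> j /eqP ->.
rewrite prodr_const; congr (_ ^+ _); apply: eq_card => j; by rewrite inE.
Qed.

End Main.

Theorem proposition4p9 (R : comNzRingType) (L n : nat) (p q : R) :
  (1 <= n)%N -> (n <= L)%N ->
  Zpart L (fun _ : 'I_n => p) (fun _ : 'I_n => q) =
  ('C(L.-1, n.-1))%:R * qint n p q ^+ (L - n).
Proof.
case: n => [|n] // _; case: L => [|L] // HnL.
rewrite /Zpart (eq_bigl (fun w => rwb (beta w))); last by move=> w; rewrite rw_beta.
rewrite (partition_big (@beta L.+1 n.+1) (fun b => rwb b)) //=.
rewrite (eq_bigr (fun _ => qint n.+1 p q ^+ (L.+1 - n.+1))); last first.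
  move=> b Hb.
  rewrite (eq_bigl (fun w => beta w == b)); last first.
    by move=> w; case: (beta w =P b) => [->|_]; rewrite ?Hb ?eqxx ?andbF.
  rewrite sum_fiber; congr (_ ^+ _).
  have [_ HS _] := rwb_props Hb.
  have := cardsC (Sb b); rewrite HS card_ord.
  have -> : ~: Sb b = [set j | b j == None] by apply/setP => j; rewrite !inE negbK.
  move=> E; apply/eqP; rewrite -(eqn_add2l n.+1) E subnKC //.
rewrite sumr_const /= -(card_rwb L n) mulr_natl.
congr (_ *+ _); apply: eq_card => b; by rewrite inE.
Qed.
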